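(* Let $S$ be a monoid, $A_S$ a Rees artinian (in particular, an artinian) right $S$-act, and $f\in\mathrm{End}(A_S)$. Then there is $n\in\mathbb N$ with $\ker f^n\vee\mathcal K_{\mathrm{Im} f^n}=\nabla_A$. Moreover, $f$ is an automorphism if and only if $f$ is injective.
   Context: $\ker h=\{(a,a'):h(a)=h(a')\}$; for a subact $B\subseteq A$, $\mathcal K_B=(B\times B)\cup\Delta_A$ where $\Delta_A=\{(a,a):a\in A\}$; $\nabla_A=A\times A$; $\vee$ is the join in the lattice of congruences on $A_S$. Rees artinian means the descending chain condition on subacts; artinian means the descending chain condition on congruences. *)

(* Defs.v *)
From Stdlib Require Import Arith.

Record Monoid := {
  mcar :> Type;
  mmul : mcar -> mcar -> mcar;
  mone : mcar;
  mmul_assoc : forall x y z, mmul x (mmul y z) = mmul (mmul x y) z;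
  mmul_1l : forall x, mmul mone x = x;
  mmul_1r : forall x, mmul x mone = x
}.

Record RAct (S : Monoid) := {
  acar :> Type;
  act : acar -> S -> acar;
  act_one : forall a, act a (mone S) = a;
  act_mul : forall a s t, act (act a s) t = act a (mmul S s t)
}.
Arguments act {S} _ _ _.

Section Acts.
Context {S : Monoid} (A : RAct S).

(* subacts (possibly empty) *)
Definition is_subact (B : A -> Prop) : Prop :=
  forall a s, B a -> B (act A a s).

Definition rees_artinian : Prop :=
  forall B : nat -> A -> Prop,
    (forall n, is_subact (B n)) ->
    (forall n a, B (Nat.succ n) a -> B n a) ->
    exists n, forall m, n <= m -> forall a, B m a <-> B n a.

Definition is_endo (f : A -> A) : Prop :=
  forall a s, f (act A a s) = act A (f a) s.

Definition is_auto (f : A -> A) : Prop :=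
  is_endo f /\ exists g, is_endo g /\ (forall a, g (f a) = a) /\ (forall a, f (g a) = a).

Definition injective (f : A -> A) : Prop := forall a b, f a = f b -> a = b.

Definition is_congruence (rho : A -> A -> Prop) : Prop :=
  (forall a, rho a a) /\ (forall a b, rho a b -> rho b a) /\
  (forall a b c, rho a b -> rho b c -> rho a c) /\
  (forall a b s, rho a b -> rho (act A a s) (act A b s)).

Definition cjoin (r1 r2 : A -> A -> Prop) : A -> A -> Prop :=
  fun a b => forall rho, is_congruence rho ->
    (forall x y, r1 x y -> rho x y) -> (forall x y, r2 x y -> rho x y) -> rho a b.

Definition kerrel (h : A -> A) : A -> A -> Prop := fun a a' => h a = h a'.

Definition Krel (B : A -> Prop) : A -> A -> Prop := fun a b => (B a /\ B b) \/ a = b.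

Definition image (h : A -> A) : A -> Prop := fun b => exists a, h a = b.

Definition nabla : A -> A -> Prop := fun _ _ => True.

End Acts.

Definition fpow {T : Type} (f : T -> T) (n : nat) : T -> T := Nat.iter n f.

(* Main.v *)
Require Import Defs.
From Stdlib Require Import Arith Lia ClassicalEpsilon.

Lemma fpow_S_r {T} (f : T -> T) n x : fpow f (S n) x = fpow f n (f x).
Proof. unfold fpow. induction n; simpl; auto. simpl in IHn. now rewrite IHn. Qed.

Lemma fpow_add {T} (f : T -> T) n m x : fpow f (n + m) x = fpow f n (fpow f m x).
Proof. unfold fpow. induction n; simpl; auto. now rewrite IHn. Qed.

Lemma fpow_endo (S : Monoid) (A : RAct S) f n : is_endo A f -> is_endo A (fpow f n).
Proof. intros Hf a s. induction n; simpl; auto. unfold fpow in *; simpl. now rewrite IHn, Hf. Qed.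

Lemma fpow_inj (S : Monoid) (A : RAct S) f n : injective A f -> injective A (fpow f n).
Proof. intros Hf. induction n; intros a b H; simpl in *; auto. Qed.

Lemma le_h1 n : n <= S n + S n. Proof. lia. Qed.
Lemma le_h2 n : n <= S n. Proof. lia. Qed.

Theorem mainTheorem10 (S : Monoid) (A : RAct S) (f : A -> A) :
  rees_artinian A -> is_endo A f ->
  (exists n : nat, 1 <= n /\
     forall a b, cjoin A (kerrel A (fpow f n)) (Krel A (image A (fpow f n))) a b
                 <-> nabla A a b)
  /\ (is_auto A f <-> injective A f).
Proof.
  intros HR Hf.
  destruct (HR (fun k => image A (fpow f k))) as [n Hn].
  - intros k a s [x Hx]. exists (act A x s). rewrite fpow_endo by auto. now subst.
  - intros k a [x Hx]. exists (f x). rewrite <- Hx, fpow_S_r. reflexivity.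
  - split.
    + exists (Nat.succ n). split; [apply le_n_S, Nat.le_0_l|]. intros a b; split; [intros; exact I|].
      intros _ rho [Hr [Hs [Ht Hc]]] H1 H2.
      assert (K : forall a, exists c, image A (fpow f (Nat.succ n)) c /\ rho a c).
      { intros x. assert (Hi : image A (fpow f (Nat.succ n + Nat.succ n)) (fpow f (Nat.succ n) x)).
        { apply (proj2 (Hn (Nat.succ n + Nat.succ n) (le_h1 n) _)).
          apply (proj1 (Hn (Nat.succ n) (le_h2 n) _)). now exists x. }
        destruct Hi as [c Hc']. exists (fpow f (Nat.succ n) c). split. now exists c.
        apply H1. unfold kerrel. rewrite <- Hc', fpow_add. reflexivity. }
      destruct (K a) as [c [Hc1 Hc2]]. destruct (K b) as [d [Hd1 Hd2]].
      apply Ht with c; auto. apply Ht with d; auto. apply H2. left; auto.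
    + split.
      * intros [_ [g [Hg1 [Hg2 Hg3]]]] x y E. rewrite <- (Hg2 x), <- (Hg2 y), E. reflexivity.
      * intros Hi.
        assert (Sur : forall a, exists c, f c = a).
        { intros a. assert (Hx : image A (fpow f (Nat.succ n)) (fpow f n a)).
          { apply (proj2 (Hn (Nat.succ n) (le_h2 n) _)). now exists a. }
          destruct Hx as [c Hc]. exists c. rewrite fpow_S_r in Hc.
          apply (fpow_inj _ _ _ n Hi) in Hc. exact Hc. }
        set (g := fun a => proj1_sig (constructive_indefinite_description _ (Sur a))).
        assert (Hg : forall a, f (g a) = a).
        { intros a. unfold g. destruct constructive_indefinite_description; auto. }
        split; auto. exists g. split; [|split].
        -- intros a s. apply Hi. rewrite Hf, !Hg. reflexivity.
        -- intros a. apply Hi. now rewrite Hg.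
        -- exact Hg.
Qed.
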